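(* Let $D$ be an $m$-Dyck path of order $\ell$. The frieze pattern $F_{\mathsf{rtn}(D)}$ satisfies \[ F_{\mathsf{rtn}(D)}(i-1,i+1) = (\text{up}_D(i) + \text{bal}_D(i)+1) \lambda_{m+2} \] for all $0 \leq i \leq m\ell + 1$.
   Context: An $m$-Dyck path of order $\ell$ is a lattice path of up steps $(0,1)$ and right steps $(1,0)$ from $(0,0)$ to $(m\ell,\ell)$ staying above the line $y = x/m$. A lattice point of the path is a corner if it is incident to both an up step and a right step; otherwise it is a non-corner. The balance lines of $D$ form a multiset of $\ell-1$ lines of slope $1/m$, one through the lowest point of each up step except the first up step. A balance line starting at $(i,i')$ whose first intersection with a non-corner point of $D$ is at $(j,j')$ is labeled $(i,j+1)$. The map $\mathsf{rtn}$ sends $D$ to the $(m+2)$-angulation of the polygon $P_{m\ell+2}$ (vertices $v_0,\ldots,v_{m\ell+1}$ labeled clockwise) consisting of the diagonals $(v_i,v_j)$ for all labels $(i,j)$ of balance lines of $D$. For $0 \le i \le m\ell+1$, $\text{up}_D(i)$ is the number of up steps of the form $(i,j)-(i,j+1)$ with $j>0$ in $D$, and $\text{bal}_D(i)$ is the number of balance lines whose first intersection with a non-corner point of $D$ is at a point $(i-1,j)$. $\lambda_p = 2\cos(\pi/p)$. For a dissection $T$ of a polygon $P_N$, $F_T$ is the (finite) frieze pattern — a function $F$ on $\{(i,j): 0 \le j-i \le N\}$ with $F(i,i)=F(i,i+N)=0$, $F(i,i+1)=F(i,i+N-1)=1$, and $F(i-1,j)F(i,j+1)-F(i,j)F(i+1,j+1)=1$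 — determined by the quiddity row $F_T(i-1,i+1)=\sum_{p\ge 3}\mu_p(\overline{i})\lambda_p$, where $\mu_p(\overline{i})$ is the number of $p$-gons of $T$ incident to the vertex $v_{i \bmod N}$. *)

(* Defs.v *)
From HB Require Import structures.
From mathcomp Require Import all_boot all_order all_algebra.
From mathcomp Require Import reals trigo.
Set Implicit Arguments. Unset Strict Implicit. Unset Printing Implicit Defensive.
Import Order.TTheory GRing.Theory Num.Theory.

(* m-Dyck paths.  A path is a sequence of steps: true = up step (0,1),    *)
(* false = right step (1,0).  Step k goes from point k to point k.+1.     *)
Definition n_up (s : seq bool) : nat := count id s.
Definition n_right (s : seq bool) : nat := count negb s.

(* D goes from (0,0) to (m*l, l) and stays (weakly) above y = x/m,       *)
Definition is_mDyck (m l : nat) (D : seq bool) : bool :=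
  [&& n_up D == l, n_right D == m * l &
      all (fun k => n_right (take k D) <= m * n_up (take k D))
          (iota 0 (size D).+1)].

Definition pt (D : seq bool) (k : nat) : nat * nat :=
  (n_right (take k D), n_up (take k D)).

(* point k is a corner iff it is incident to both an up and a right step *)
Definition is_corner (D : seq bool) (k : nat) : bool :=
  [&& 0 < k, k < size D & nth false D k.-1 != nth false D k].

(* (x,y) is a lattice point of D (necessarily the point number x+y) *)
Definition on_path (D : seq bool) (x y : nat) : bool :=
  (x + y <= size D) && (pt D (x + y) == (x, y)).

Definition noncorner_at (D : seq bool) (x y : nat) : bool :=
  on_path D x y && ~~ is_corner D (x + y).

(* Balance line through the lowest point (i,i') = pt D k of the up step k: *)
(* its lattice points to the right are (i + m t, i' + t), t >= 1.  The     *)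
(* first one that is a non-corner point of D is (j, j') with j = i + m t;  *)
(* the line is labelled (i, j+1).                                          *)
Definition bal_t (m : nat) (D : seq bool) (k : nat) : nat :=
  let: (i, i') := pt D k in
  (find (fun t => noncorner_at D (i + m * t) (i' + t)) (iota 1 (size D))).+1.

Definition bal_label (m : nat) (D : seq bool) (k : nat) : nat * nat :=
  let: (i, _) := pt D k in (i, (i + m * bal_t m D k).+1).

Definition nonfirst_ups (D : seq bool) : seq nat :=
  [seq k <- iota 0 (size D) | nth false D k && (find id D < k)].

Definition bal_labels (m : nat) (D : seq bool) : seq (nat * nat) :=
  [seq bal_label m D k | k <- nonfirst_ups D].

Definition up_D (D : seq bool) (i : nat) : nat :=
  count (fun k => [&& nth false D k, (pt D k).1 == i & 0 < (pt D k).2])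
        (iota 0 (size D)).

(* bal_D(i): balance lines whose first non-corner intersection is at      *)
(* a point (i-1, j), i.e. whose label has second component i.             *)
Definition bal_D (m : nat) (D : seq bool) (i : nat) : nat :=
  count (fun lab : nat * nat => lab.2 == i) (bal_labels m D).

(* rtn(D): the set of diagonals (v_i, v_j), (i,j) a label of D, given as  *)
(* a symmetric relation on vertex indices.                                *)
Definition rtn (m : nat) (D : seq bool) : rel nat :=
  fun a b => ((a, b) \in bal_labels m D) || ((b, a) \in bal_labels m D).

(* Dissections of the polygon P_N with vertices v_0, ..., v_{N-1}         *)
(* (clockwise), given by a relation dg of diagonals.                      *)
Definition cdist (N a b : nat) : nat := (b + N - a) %% N.

Definition strictly_between (N a b c : nat) : bool :=
  (0 < cdist N a c) && (cdist N a c < cdist N a b).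

Definition is_side (N : nat) (S : {set 'I_N}) (a b : 'I_N) : bool :=
  [&& a \in S, b \in S, a != b &
      [forall c in S, ~~ strictly_between N a b c]].

Definition boundary_edge (N a b : nat) : bool :=
  (b == a.+1 %% N) || (a == b.+1 %% N).

(* S is (the vertex set of) a piece of the dissection: a polygon with at   *)
(* least 3 vertices, all of whose sides are edges of P_N or diagonals of   *)
(* the dissection, and which is not cut by any diagonal.                   *)
Definition is_piece (N : nat) (dg : rel nat) (S : {set 'I_N}) : bool :=
  [&& 2 < #|S|,
      [forall a, forall b,
          is_side S a b ==> (boundary_edge N a b || dg a b)] &
      [forall x : 'I_N, forall y : 'I_N, dg x y ==>
          ~~ [exists c in S, exists d in S,
                strictly_between N x y c && strictly_between N y x d]]].

Definition mu (N : nat) (dg : rel nat) (p v : nat) : nat :=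
  #|[set S : {set 'I_N} | [&& is_piece dg S, #|S| == p &
                              [exists x in S, val x == v %% N]]]|.

Section Frieze.
Variable R : realType.
Local Open Scope ring_scope.

Definition lambda (p : nat) : R := 2 * cos (pi / p%:R).

Definition quiddity (N : nat) (dg : rel nat) (i : int) : R :=
  \sum_(3 <= p < N.+1) (mu N dg p (absz (i %% Posz N)%Z))%:R * lambda p.

(* Frieze determined by the quiddity row c, via the standard recurrence   *)
(* F(i,i) = 0, F(i,i+1) = 1, F(i,j+1) = c(j) F(i,j) - F(i,j-1);           *)
(* in particular F(i-1,i+1) = c(i).  contp c i k = (F(i,i+k), F(i,i+k+1)). *)
Fixpoint contp (c : int -> R) (i : int) (k : nat) : R * R :=
  match k with
  | 0 => (0, 1)
  | k'.+1 => let: (a, b) := contp c i k' in (b, c (i + Posz k' + 1)%R * b - a)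
  end.

Definition frieze (c : int -> R) (i j : int) : R :=
  if (i <= j)%R then (contp c i (absz (j - i))).1 else 0.

Definition frieze_of (N : nat) (dg : rel nat) : int -> int -> R :=
  frieze (quiddity N dg).
End Frieze.

(* Main.v *)
Require Import Defs.
From HB Require Import structures.
From mathcomp Require Import all_boot all_order all_algebra.
From mathcomp Require Import reals trigo.
From mathcomp Require Import zify.
Import Order.TTheory GRing.Theory Num.Theory.

Module B.
Set Implicit Arguments. Unset Strict Implicit. Unset Printing Implicit Defensive.

Section Polygon.
Variable N : nat.

Lemma cdistE a b : a < N -> b < N -> cdist N a b = if a <= b then b - a else b + N - a.
Proof.
move=> aN bN; rewrite /cdist; case: leqP => h.
  have -> : b + N - a = (b - a) + N by lia.
  by rewrite modnDr modn_small //; lia.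
by rewrite modn_small //; lia.
Qed.

Lemma cdist_lt a b : a < N -> b < N -> cdist N a b < N.
Proof. by move=> aN bN; rewrite cdistE //; case: (leqP a b); lia. Qed.

Lemma cdist_rot c a b : a < N -> b < N -> c < N ->
  cdist N a b = if cdist N c a <= cdist N c b then cdist N c b - cdist N c a
                else cdist N c b + N - cdist N c a.
Proof.
move=> aN bN cN; rewrite !cdistE //.
case: (leqP a b) => ab; case: (leqP c a) => ca; case: (leqP c b) => cb;
  case: leqP => h; lia.
Qed.

Lemma cdist0 a b : a < N -> b < N -> (cdist N a b == 0) = (a == b).
Proof. move=> aN bN; rewrite cdistE //; case: (leqP a b) => h; apply/eqP/eqP; lia. Qed.

Lemma cdist_inj c a b : a < N -> b < N -> c < N -> cdist N c a = cdist N c b -> a = b.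
Proof. by move=> aN bN cN; rewrite !cdistE //; case: (leqP c a); case: (leqP c b); lia. Qed.

Lemma cdist_sym a b : a < N -> b < N -> a != b -> cdist N a b + cdist N b a = N.
Proof. move=> aN bN /eqP ab; rewrite !cdistE //; case: (leqP a b); case: (leqP b a); lia. Qed.

Lemma sbE a b c : a < N -> b < N -> c < N ->
  strictly_between N a b c =
  ((a < b) && (a < c) && (c < b)) || ((b < a) && ((a < c) || (c < b))).
Proof.
move=> aN bN cN; rewrite /strictly_between !cdistE //.
case: (ltngtP a b) => ab; case: (ltngtP a c) => ac; case: (ltngtP c b) => cb;
  apply/idP/idP; try lia; rewrite ?leqnn; try (case: leqP; lia); try lia.
Qed.


Lemma side_exists (S : {set 'I_N}) (v : 'I_N) : v \in S -> 1 < #|S| -> exists w, is_side S v w.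
Proof.
move=> vS cS.
have : 0 < #|S :\ v| by move: cS; rewrite (cardsD1 v S) vS add1n ltnS. 
case/card_gt0P => w0 w0S.
case: (arg_minnP (fun w : 'I_N => cdist N v w) w0S) => w wS hmin.
exists w; have wS' : w \in S :\ v by []. move: wS'; rewrite !inE => /andP [wv wS2].
rewrite /is_side vS wS2 eq_sym wv /=; apply/forall_inP => c cS2.
rewrite /strictly_between; apply/negP => /andP [c0 cw].
have cv : c != v by apply: contraTneq c0 => ->; rewrite lt0n negbK cdist0.
have cin : c \in S :\ v by rewrite !inE cv cS2.
by have := hmin c cin; lia.
Qed.

Lemma side_mem (S : {set 'I_N}) a b : is_side S a b -> [/\ a \in S, b \in S, a != b &
  forall c, c \in S -> ~~ strictly_between N a b c].
Proof. by case/and4P => aS bS ab /forall_inP h; split. Qed.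

Lemma side_not_back (T : {set 'I_N}) (u u' : 'I_N) : is_side T u u' -> 2 < #|T| ->
  nat_of_ord u != (nat_of_ord u').+1 %% N.
Proof.
move=> /side_mem [uT u'T uu' hs] cT; apply/negP => /eqP e.
have : ~~ (T \subset [set u; u']).
  apply/negP => /subset_leq_card; rewrite cards2 => h.
  have : (u != u').+1 <= 2 by case: (u != u').
  lia.
case/subsetPn => t tT; rewrite !inE negb_or => /andP [tu tu'].
have := hs t tT; rewrite /strictly_between.
have Npos : 0 < N by apply: leq_ltn_trans (leq0n _) (ltn_ord u).
have h1 := cdist_sym (ltn_ord u') (ltn_ord u) ltac:(by rewrite eq_sym).
have e1 : cdist N u' u = 1.
  have vne : nat_of_ord u <> nat_of_ord u' by move=> h; move: uu'; rewrite (ord_inj h) eqxx.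
  rewrite cdistE //; case: (ltnP (nat_of_ord u').+1 N) => h.
    by rewrite e modn_small // leqnSn subSnn.
  have Ne : (nat_of_ord u').+1 = N by have := ltn_ord u'; lia.
  have u0 : nat_of_ord u = 0 by rewrite e Ne modnn.
  rewrite u0 leqn0; case: eqP => [u'0|]; [by move: vne; rewrite u0 u'0 | lia].
have h2 : cdist N u t != 0 by rewrite cdist0 // eq_sym.
have h3 : cdist N u t != cdist N u u' by apply/eqP => /cdist_inj; move/(_ (ltn_ord _) (ltn_ord _) (ltn_ord _)) => /ord_inj /eqP; rewrite (negbTE tu').
have h4 := cdist_lt (ltn_ord u) (ltn_ord t).
by rewrite lt0n h2 /=; lia.
Qed.

Lemma sb_succ (a b c : 'I_N) : nat_of_ord b = (nat_of_ord a).+1 %% N -> ~~ strictly_between N a b c.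
Proof.
move=> e; rewrite /strictly_between.
have e1 : cdist N a b <= 1.
  rewrite cdistE //; case: (ltnP (nat_of_ord a).+1 N) => h.
    by rewrite e modn_small // leqnSn subSnn.
  have Ne : (nat_of_ord a).+1 = N by have := ltn_ord a; lia.
  have b0 : nat_of_ord b = 0 by rewrite e Ne modnn.
  rewrite b0; case: (leqP a 0) => h2; lia.
by apply/negP => /andP [h1 h2]; lia.
Qed.


Lemma card_le2 (T : {set 'I_N}) u u' : 2 < #|T| -> ~~ (T \subset [set u; u']).
Proof.
move=> cT; apply/negP => /subset_leq_card; rewrite cards2 => h.
have : (u != u').+1 <= 2 by case: (u != u').
lia.
Qed.

Lemma ar_side a b c : b <= c -> c <= a -> b < a ->
  ~~ ((0 < (if a <= c then c - a else c + N - a)) &&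
      ((if a <= c then c - a else c + N - a) < (if a <= b then b - a else b + N - a))).
Proof. move=> h1 h2 h3; case: (leqP a c) => h4; case: (leqP a b) => h5; apply/negP; lia. Qed.

Lemma ar_sbc a b : 0 < b -> b < a -> a < N ->
  (0 < (if a <= 0 then 0 - a else 0 + N - a)) &&
  ((if a <= 0 then 0 - a else 0 + N - a) < (if a <= b then b - a else b + N - a)).
Proof. move=> h1 h2 h3; case: (leqP a 0) => h4; case: (leqP a b) => h5; apply/andP; lia. Qed.

Lemma ar_mem a b c : b < c -> c < a ->
  (0 < (if b <= c then c - b else c + N - b)) &&
  ((if b <= c then c - b else c + N - b) < (if b <= a then a - b else a + N - b)).
Proof. move=> h1 h2; case: (leqP b c) => h4; case: (leqP b a) => h5; apply/andP; lia. Qed.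

Lemma piece_sub (dg : rel nat) (S T : {set 'I_N}) (a b : 'I_N) :
  is_piece dg S -> is_piece dg T -> is_side S a b -> is_side T a b -> S \subset T.
Proof.
move=> pS pT sS sT.
case/and3P: pT => cT /forallP sidesT _.
case/and3P: pS => cS _ /forallP cutS.
have [aS bS ab hsS] := side_mem sS.
have [aT bT _ hsT] := side_mem sT.
apply/subsetP => c cS'; apply/negPn/negP => cT'.
pose rho := fun z : 'I_N => cdist N c z.
case: (arg_minnP rho aT) => u' u'T hmin'.
case: (arg_maxnP rho aT) => u uT0 hmax.
have uT : u \in T by exact: uT0.
have u'T2 : u' \in T by exact: u'T.
have rpos : forall t, t \in T -> 0 < rho t.
  move=> t tT; rewrite lt0n /rho cdist0 //; apply/eqP => e.
  by move: tT cT'; rewrite -(ord_inj e) => ->.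
have rinj : forall t t' : 'I_N, rho t = rho t' -> t = t'.
  by move=> t t' e; apply: ord_inj; apply: (cdist_inj _ _ (ltn_ord c) e).
have rot : forall x y : 'I_N, cdist N x y =
    if rho x <= rho y then rho y - rho x else rho y + N - rho x.
  by move=> x y; apply: cdist_rot.
have rc : rho c = 0 by apply/eqP; rewrite /rho cdist0.
have hN : forall t : 'I_N, rho t < N by move=> t; apply: cdist_lt.
clearbody rho.
have Hle : rho u' <= rho u by apply: hmin'.
have Hlt : rho u' < rho u.
  rewrite ltn_neqAle Hle andbT; apply/eqP => e.
  have : T \subset [set u; u'].
    apply/subsetP => t tT; rewrite !inE.
    have h1 : rho u' <= rho t by apply: hmin'.
    have h2 : rho t <= rho u by apply: hmax.
    have e2 : rho t = rho u by apply/eqP; rewrite eqn_leq h2 -e h1.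
    by rewrite (rinj t u e2) eqxx.
  by rewrite (negbTE (card_le2 u u' cT)).
have uu' : u != u' by apply/eqP => e; move: Hlt; rewrite e ltnn.
have side_uu' : is_side T u u'.
  rewrite /is_side uT u'T2 uu' /=; apply/forall_inP => t tT.
  have h1 : rho u' <= rho t by apply: hmin'.
  have h2 : rho t <= rho u by apply: hmax.
  rewrite /strictly_between (rot u t) (rot u u'); exact: ar_side.
have sbc : strictly_between N u u' c.
  rewrite /strictly_between (rot u c) (rot u u') rc; exact: ar_sbc (rpos _ u'T2) Hlt (hN u).
have := sidesT u; move/forallP/(_ u'); rewrite side_uu' /= => /orP [be|dgu].
  case/orP: be => /eqP e.
    by have := sb_succ c e; rewrite sbc.
  by have := side_not_back side_uu' cT; rewrite e eqxx.
have := cutS u; move/forallP/(_ u'); rewrite dgu /= => /negP; apply.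
have memT : forall t, t \in T -> t = u \/ t = u' \/ strictly_between N u' u t.
  move=> t tT.
  have h1 : rho u' <= rho t by apply: hmin'.
  have h2 : rho t <= rho u by apply: hmax.
  case: (ltngtP (rho t) (rho u)) => [lt|gt|e]; last by left; apply: rinj.
    case: (ltngtP (rho t) (rho u')) => [lt2|gt2|e2]; last by right; left; apply: rinj.
      by move: (leq_trans lt2 h1); rewrite ltnn.
    right; right; rewrite /strictly_between (rot u' t) (rot u' u); exact: ar_mem.
  by move: (leq_ltn_trans h2 gt); rewrite ltnn.
have exd : forall d, d \in S -> strictly_between N u' u d ->
    [exists c0 in S, exists d0 in S,
       strictly_between N u u' c0 && strictly_between N u' u d0].
  move=> d dS hd; apply/existsP; exists c; rewrite cS' /=.
  by apply/existsP; exists d; rewrite dS sbc hd.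
case: (boolP (strictly_between N u' u a)) => ha; first exact: exd ha.
case: (boolP (strictly_between N u' u b)) => hb; first exact: exd hb.
have ha' : a = u \/ a = u'.
  by have [e|[e|h]] := memT a aT; [left | right | rewrite h in ha].
have hb' : b = u \/ b = u'.
  by have [e|[e|h]] := memT b bT; [left | right | rewrite h in hb].
case: ha' => ea; case: hb' => eb.
- by move: ab; rewrite ea eb eqxx.
- by have := hsS c cS'; rewrite ea eb sbc.
- have : T \subset [set u; u'].
    apply/subsetP => t tT; rewrite !inE.
    have [->|[->|h]] := memT t tT; rewrite ?eqxx ?orbT //.
    by have := hsT t tT; rewrite ea eb h.
  by rewrite (negbTE (card_le2 u u' cT)).
- by move: ab; rewrite ea eb eqxx.
Qed.

Lemma piece_unique (dg : rel nat) (S T : {set 'I_N}) (a b : 'I_N) :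
  is_piece dg S -> is_piece dg T -> is_side S a b -> is_side T a b -> S = T.
Proof.
move=> pS pT sS sT; apply/eqP; rewrite eqEsubset.
by rewrite (piece_sub pS pT sS sT) (piece_sub pT pS sT sS).
Qed.


Lemma pieces_at_le (dg : rel nat) (v : 'I_N) :
  #|[set S : {set 'I_N} | is_piece dg S & v \in S]| <=
  #|[set w : 'I_N | (nat_of_ord w == (nat_of_ord v).+1 %% N) || dg v w]|.
Proof.
set Pv := [set S : {set 'I_N} | is_piece dg S & v \in S].
set W := [set w : 'I_N | (nat_of_ord w == (nat_of_ord v).+1 %% N) || dg v w].
pose f (S : {set 'I_N}) := odflt v [pick w in W | is_side S v w].
have fP : forall S, S \in Pv -> f S \in W /\ is_side S v (f S).
  move=> S; rewrite inE => /andP [pS vS].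
  have pS' := pS; case/and3P: pS' => cS /forallP sidesS _.
  have [w sw] := side_exists vS (ltnW cS).
  have wW : w \in W.
    have := sidesS v; move/forallP/(_ w); rewrite sw /= => /orP [be|dgw].
      case/orP: be => e; first by rewrite inE e.
      by have := side_not_back sw cS; rewrite e.
    by rewrite inE dgw orbT.
  rewrite /f; case: pickP => [w' /andP [w'W sw']|/(_ w)]; first by [].
  by rewrite wW sw.
have finj : {in Pv &, injective f}.
  move=> S T SP TP e.
  have [_ sS] := fP S SP; have [_ sT] := fP T TP.
  move: SP TP; rewrite !inE => /andP [pS _] /andP [pT _].
  by apply: (piece_unique pS pT sS); rewrite e.
rewrite -(card_in_imset finj); apply: subset_leq_card.
by apply/subsetP => w /imsetP [S SP ->]; have [] := fP S SP.
Qed.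

Lemma card_vals (s : seq nat) : #|[set w : 'I_N | nat_of_ord w \in s]| <= size s.
Proof.
apply: (@leq_trans #|pmap insub s : seq 'I_N|).
  apply: subset_leq_card; apply/subsetP => w; rewrite inE => ws.
  by rewrite mem_pmap_sub.
apply: leq_trans (card_size _) _; rewrite size_pmap_sub; exact: count_size.
Qed.

Lemma card_W_le (dg : rel nat) (v : 'I_N) :
  #|[set w : 'I_N | (nat_of_ord w == (nat_of_ord v).+1 %% N) || dg v w]| <=
  1 + #|[set w : 'I_N | dg v w]|.
Proof.
rewrite (_ : [set w : 'I_N | _ || _] = [set w : 'I_N | nat_of_ord w \in [:: (nat_of_ord v).+1 %% N]] :|: [set w : 'I_N | dg v w]); last first.
  by apply/setP => w; rewrite !inE.
apply: leq_trans (leq_card_setU _ _) _; rewrite leq_add2r.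
exact: (card_vals [:: _]).
Qed.

End Polygon.

End B.
Import B.

Module A.
Set Implicit Arguments. Unset Strict Implicit. Unset Printing Implicit Defensive.

Lemma first_ex (P : pred nat) w : P w -> exists r, P r /\ forall p, p < r -> ~~ P p.
Proof.
move=> Pw; have ex : exists n, P n by exists w.
case: (ex_minnP ex) => r Pr Hmin; exists r; split => // p Hp; apply/negP => Pp.
by have := Hmin _ Pp; rewrite leqNgt Hp.
Qed.

Section PathLemmas.
Variables (m l : nat) (D : seq bool).
Hypothesis m_gt0 : 0 < m.
Hypothesis l_gt0 : 0 < l.
Hypothesis dyck : is_mDyck m l D.

Local Notation n := (size D).
Notation xx p := (n_right (take p D)).
Notation yy p := (n_up (take p D)).
Definition H p : int := (Posz (m * yy p) - Posz (xx p))%R.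
Definition hk k p : int := (H p - H k)%R.

Lemma xy_sum p : p <= n -> xx p + yy p = p.
Proof.
move=> hp; rewrite /n_right /n_up addnC.
have := count_predC id (take p D); rewrite size_takel // => <-.

Qed.

Lemma xS p : p < n -> xx p.+1 = xx p + ~~ nth false D p.
Proof. by move=> hp; rewrite (take_nth false hp) -cats1 /n_right count_cat /= addn0. Qed.
Lemma yS p : p < n -> yy p.+1 = yy p + nth false D p.
Proof. by move=> hp; rewrite (take_nth false hp) -cats1 /n_up count_cat /= addn0. Qed.

Lemma x0 : xx 0 = 0. Proof. by rewrite take0. Qed.
Lemma y0 : yy 0 = 0. Proof. by rewrite take0. Qed.

Lemma dyck_up : n_up D = l. Proof. by case/and3P: dyck => /eqP. Qed.
Lemma dyck_right : n_right D = m * l. Proof. by case/and3P: dyck => _ /eqP. Qed.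
Lemma sizeD : n = m * l + l.
Proof.
have := count_predC id D; rewrite -/(n_up D) -[count _ _]/(n_right D).
by rewrite dyck_up dyck_right addnC => <-.
Qed.
Lemma xn : xx n = m * l. Proof. by rewrite take_size dyck_right. Qed.
Lemma yn : yy n = l. Proof. by rewrite take_size dyck_up. Qed.

Lemma dyck_le p : p <= n -> xx p <= m * yy p.
Proof.
move=> hp; case/and3P: dyck => _ _ /allP /(_ p); apply.
by rewrite mem_iota add0n ltnS hp.
Qed.

Lemma H_ge0 p : p <= n -> (0 <= H p)%R.
Proof. move=> /dyck_le; rewrite /H; lia. Qed.

Lemma H0 : H 0 = 0%R. Proof. by rewrite /H x0 y0 muln0. Qed.
Lemma Hn : H n = 0%R. Proof. by rewrite /H xn yn subrr. Qed.

Lemma HS p : p < n -> H p.+1 = (H p + (if nth false D p then (Posz m) else -1))%R.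
Proof. move=> hp; rewrite /H (xS hp) (yS hp); case: (nth false D p) => /=; lia. Qed.

Lemma hkS k p : p < n -> hk k p.+1 = (hk k p + (if nth false D p then (Posz m) else -1))%R.
Proof. by move=> hp; rewrite /hk HS //; case: ifP => _; lia. Qed.

Lemma hkk k : hk k k = 0%R. Proof. by rewrite /hk subrr. Qed.

Lemma hk_up k : k < n -> nth false D k -> hk k k.+1 = (Posz m).
Proof. by move=> hk1 hn; rewrite hkS // hkk hn add0r. Qed.

Lemma hk_trans k k' p : hk k' p = (hk k p - hk k k')%R.
Proof. rewrite /hk; lia. Qed.

Lemma x_mono p q : p <= q -> q <= n -> xx p <= xx q.
Proof.
move=> pq; elim: q pq => [|q IH]; first by rewrite leqn0 => /eqP ->.
rewrite leq_eqVlt => /orP [/eqP -> //| pq] qn.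
rewrite (xS qn); have := IH pq (ltnW qn); lia.
Qed.
Lemma y_mono p q : p <= q -> q <= n -> yy p <= yy q.
Proof.
move=> pq; elim: q pq => [|q IH]; first by rewrite leqn0 => /eqP ->.
rewrite leq_eqVlt => /orP [/eqP -> //| pq] qn.
rewrite (yS qn); have := IH pq (ltnW qn); lia.
Qed.

Lemma nth0 : nth false D 0.
Proof.
have n0 : 0 < n by rewrite sizeD; nia.
have := dyck_le n0; rewrite (xS n0) (yS n0) x0 y0.
by case: (nth false D 0) => //; rewrite muln0.
Qed.

Lemma find_first : find id D = 0.
Proof. by case: D nth0 => //= b s ->. Qed.

Lemma ivt_down k a b (L : int) : a <= b -> b <= n ->
  (L <= hk k a)%R -> (hk k b <= L)%R -> exists p, [/\ a <= p, p <= b & hk k p = L].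
Proof.
move=> ab bn ha hb.
have hw : [&& a <= b, b <= b & (hk k b <= L)%R] by rewrite ab leqnn hb.
have [r [/and3P [ar rb hr] hmin]] :=
  @first_ex (fun p => [&& a <= p, p <= b & (hk k p <= L)%R]) b hw.
exists r; split => //.
case: (ltnP a r) => [lt|]; last first.
  move=> ra; have ra2 : r = a by lia.
  by move: hr; rewrite ra2; lia.
have := hmin r.-1; rewrite prednK ?(leq_ltn_trans _ lt) // => /(_ (leqnn _)).
have h1 : a <= r.-1 by rewrite -ltnS prednK // (leq_ltn_trans _ lt).
have h2 : r.-1 <= b by rewrite (leq_trans (leq_pred _)).
rewrite h1 h2 /= -ltNge => hlt.
have rn : r.-1 < n by rewrite prednK ?(leq_ltn_trans _ lt) // (leq_trans rb).
have E := hkS k rn; rewrite prednK ?(leq_ltn_trans _ lt) // in E.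
move: hr hlt; rewrite E; case: ifP => _; have := m_gt0; lia.
Qed.


Lemma hk0_line k p : k <= p -> p <= n -> hk k p = 0%R ->
  p = k + m.+1 * (yy p - yy k) /\ xx p = xx k + m * (yy p - yy k).
Proof.
move=> kp pn h0.
have sk := xy_sum (leq_trans kp pn); have sp := xy_sum pn.
have mx := x_mono kp pn; have my := y_mono kp pn.
move: h0; rewrite /hk /H => h0.
have e1 : xx p - xx k = m * (yy p - yy k) by rewrite mulnBr; lia.
split; last by lia.
rewrite mulSn; lia.
Qed.

Lemma line_nc k t : k <= n ->
  noncorner_at D (xx k + m * t) (yy k + t) =
  [&& k + m.+1 * t <= n, hk k (k + m.+1 * t) == 0%R & ~~ is_corner D (k + m.+1 * t)].
Proof.
move=> kn; rewrite /noncorner_at /on_path.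
have -> : xx k + m * t + (yy k + t) = k + m.+1 * t by have := xy_sum kn; rewrite mulSn; lia.
case pn: (k + m.+1 * t <= n) => //=; congr (_ && _).
rewrite /pt xpair_eqE.
have kp : k <= k + m.+1 * t by apply: leq_addr.
apply/idP/idP.
  move=> /andP [/eqP ex /eqP ey]; apply/eqP; rewrite /hk /H ex ey; lia.
move=> /eqP h0; have [e1 e2] := hk0_line kp pn h0.
have my := y_mono kp pn.
have et : yy (k + m.+1 * t) - yy k = t.
  apply/eqP; rewrite -(eqn_pmul2l (ltn0Sn m)); apply/eqP.
  move: e1; set q := yy _ - yy _; lia.
by rewrite e2 et; apply/andP; split; apply/eqP => //; lia.
Qed.

Definition ee k := k + m.+1 * bal_t m D k.

Lemma up_ltn k : nth false D k -> k < n.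
Proof. by move=> h; case: ltnP => // /(nth_default false) => e; rewrite e in h. Qed.

Lemma corner_nth p : is_corner D p -> [/\ 0 < p, p < n & nth false D p.-1 != nth false D p].
Proof. by case/and3P. Qed.

Lemma ee_exists k : nth false D k -> exists p0,
  [/\ k < p0, p0 <= n, hk k p0 = 0%R & ~~ is_corner D p0].
Proof.
move=> hup; have kn := up_ltn hup.
have hk1 := hk_up kn hup.
case hneg: (has (fun p => [&& k < p, p <= n & (hk k p < 0)%R]) (iota 0 n.+1)).
  move/hasP: hneg => [w _ hw].
  have [r [/and3P [kr rn hr] hmin]] := @first_ex (fun p => [&& k < p, p <= n & (hk k p < 0)%R]) w hw.
  have r1 : k.+1 < r.
    rewrite ltn_neqAle kr andbT; apply/eqP => e; move: hr; rewrite -e hk1; lia.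
  have rpos : 0 < r by lia.
  have ge0 : forall p, k < p -> p < r -> (0 <= hk k p)%R.
    move=> p kp pr; have := hmin p pr; rewrite kp /= (leq_trans (ltnW pr) rn) /=; lia.
  have r1n : r.-1 < n by lia.
  have E1 := hkS k r1n; rewrite prednK // in E1.
  have g1 := ge0 r.-1 ltac:(lia) ltac:(lia).
  have nr1 : nth false D r.-1 = false.
    by move: E1 hr g1; case: (nth _ _ _) => //; have := m_gt0; lia.
  have h1 : hk k r.-1 = 0%R by move: E1 hr g1; rewrite nr1; lia.
  have r3 : k.+2 < r.
    rewrite ltn_neqAle r1 andbT; apply/eqP => e; move: h1; rewrite -e /= hk1; have := m_gt0; lia.
  have r2n : r.-2 < n by lia.
  have E2 := hkS k r2n.
  have r21 : r.-2.+1 = r.-1 by lia.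
  rewrite r21 in E2.
  have g2 := ge0 r.-2 ltac:(lia) ltac:(lia).
  have nr2 : nth false D r.-2 = false.
    move: E2 h1 g2; case: (nth _ _ _) => //; have := m_gt0; lia.
  exists r.-1; split => //; try lia.
  rewrite /is_corner; apply/negP => /and3P [_ _].
  by rewrite nr1 nr2.
exists n; split; [exact kn | exact: leqnn | | ].
- have hn : (0 <= hk k n)%R.
    case: (lerP 0 (hk k n)) => // hl; move: hneg => /hasP; case.
    by exists n; [rewrite mem_iota /= | rewrite kn leqnn hl].
  have := H_ge0 (ltnW kn); move: hn; rewrite /hk Hn; lia.
- by rewrite /is_corner ltnn andbF.
Qed.


Lemma bal_tE k : bal_t m D k =
  (find (fun t => noncorner_at D (xx k + m * t) (yy k + t)) (iota 1 n)).+1.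
Proof. by []. Qed.

Lemma ee_spec k : nth false D k ->
  [/\ k < ee k, ee k <= n, hk k (ee k) = 0%R, ~~ is_corner D (ee k) &
      forall p, k < p -> p < ee k -> hk k p = 0%R -> is_corner D p].
Proof.
move=> hup; have kn := up_ltn hup.
set P := fun t => noncorner_at D (xx k + m * t) (yy k + t).
have [p0 [kp0 p0n h0 nc0]] := ee_exists hup.
have [e1 _] := hk0_line (ltnW kp0) p0n h0.
set t0 := yy p0 - yy k in e1.
have Pt0 : P t0 by rewrite /P line_nc ?(ltnW kn) // -e1 p0n h0 eqxx.
have t0pos : 0 < t0 by move: kp0; rewrite e1; case: (t0) => //; rewrite muln0 addn0 ltnn.
have t0n : t0 <= n by move: p0n; rewrite e1; nia.
have hP : has P (iota 1 n) by apply/hasP; exists t0 => //; rewrite mem_iota; lia.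
have jn : find P (iota 1 n) < n by rewrite -[X in _ < X](size_iota 1) -has_find.
have Pj := nth_find 0 hP; rewrite nth_iota // add1n in Pj.
have eeE : ee k = k + m.+1 * (find P (iota 1 n)).+1 by [].
move: Pj; rewrite /P line_nc ?(ltnW kn) // -eeE => /and3P [een /eqP he nce].
split => //.
- by rewrite eeE; nia.
move=> p kp pe hp0.
have pn : p <= n by lia.
have [e2 _] := hk0_line (ltnW kp) pn hp0.
set t1 := yy p - yy k in e2.
have t1pos : 0 < t1 by move: kp; rewrite e2; case: (t1) => //; rewrite muln0 addn0 ltnn.
have t1j : t1.-1 < find P (iota 1 n).
  move: pe; rewrite eeE e2 ltn_add2l ltn_pmul2l //; lia.
have := before_find 0 t1j; rewrite nth_iota ?(ltn_trans t1j jn) // add1n prednK //.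
rewrite /P line_nc ?(ltnW kn) // -e2 pn hp0 eqxx /=.
by move/negbFE.
Qed.

Lemma ee_char k p : nth false D k -> k < p -> p <= n -> hk k p = 0%R -> ~~ is_corner D p ->
  (forall p', k < p' -> p' < p -> hk k p' = 0%R -> is_corner D p') -> ee k = p.
Proof.
move=> hup kp pn h0 nc hmin.
have [ke en he nce hm] := ee_spec hup.
case: (ltngtP (ee k) p) => // lt.
  by have := hmin _ ke lt he; rewrite (negbTE nce).
by have := hm _ kp lt h0; rewrite (negbTE nc).
Qed.


Lemma hkSt k p : p < n -> nth false D p -> hk k p.+1 = (hk k p + Posz m)%R.
Proof. by move=> pn hp; rewrite hkS // hp. Qed.
Lemma hkSf k p : p < n -> nth false D p = false -> hk k p.+1 = (hk k p - 1)%R.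
Proof. by move=> pn hp; rewrite hkS // hp. Qed.

Lemma lemU q r : nth false D q -> q < r -> r <= n -> (hk q r < 0)%R ->
  (forall p, q < p -> p < r -> (0 <= hk q p)%R) ->
  ee q = r.-1 /\ nth false D r.-1 = false.
Proof.
move=> hup qr rn hr ge0.
have qn := up_ltn hup; have hk1 := hk_up qn hup.
have mpos : (0 < Posz m)%R by rewrite ltz_nat.
have r1 : q.+1 < r.
  rewrite ltn_neqAle qr andbT; apply/eqP => e; move: hr; rewrite -e hk1; lia.
have r1n : r.-1 < n by lia.
have E1 := hkS q r1n; rewrite prednK ?(leq_ltn_trans _ r1) // in E1.
have g1 := ge0 r.-1 ltac:(lia) ltac:(lia).
have nr1 : nth false D r.-1 = false.
  by move: E1 hr g1; case: (nth _ _ _) => //; lia.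
have h1 : hk q r.-1 = 0%R by move: E1 hr g1; rewrite nr1; lia.
have r3 : q.+2 < r.
  rewrite ltn_neqAle r1 andbT; apply/eqP => e; move: h1; rewrite -e /= hk1; lia.
have r2n : r.-2 < n by lia.
have E2 := hkS q r2n.
have r21 : r.-2.+1 = r.-1 by lia.
rewrite r21 in E2.
have g2 := ge0 r.-2 ltac:(lia) ltac:(lia).
have nr2 : nth false D r.-2 = false.
  move: E2 h1 g2; case: (nth _ _ _) => //; lia.
split => //.
apply: ee_char => //; try lia.
  by rewrite /is_corner; apply/negP => /and3P [_ _]; rewrite nr1 nr2.
move=> p' qp' pr' hp'.
have p'n : p' < n by lia.
have Ep := hkS q p'n.
have gp := ge0 p'.+1 ltac:(lia) ltac:(lia).
have np' : nth false D p' by move: Ep gp; rewrite hp'; case: (nth _ _ _) => //; lia.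
have qp2 : q < p'.-1.
  case: (ltnP q p'.-1) => // h; have e : p' = q.+1 by lia.
  by move: hp'; rewrite e hk1; lia.
have Eq := hkS q (p:=p'.-1) ltac:(lia).
rewrite prednK ?(leq_ltn_trans (leq0n _) qp') in Eq.
have gq := ge0 p'.-1 qp2 ltac:(lia).
have np2 : nth false D p'.-1 = false by move: Eq gq; rewrite hp'; case: (nth _ _ _) => //; lia.
  by rewrite /is_corner np2 np' p'n (leq_ltn_trans (leq0n _) qp').
by [].
Qed.

Lemma ee_ge0 k p : nth false D k -> k < p -> p <= ee k -> (0 <= hk k p)%R.
Proof.
move=> hup kp pe; have [ke en _ _ _] := ee_spec hup.
case: (lerP 0 (hk k p)) => // hneg.
have hw : [&& k < p, p <= ee k & (hk k p < 0)%R] by rewrite kp pe hneg.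
have [r [/and3P [kr re hr] hmin]] :=
  @first_ex (fun p => [&& k < p, p <= ee k & (hk k p < 0)%R]) p hw.
have [] := lemU hup kr (leq_trans re en) hr.
  move=> p' kp' p'r; have := hmin p' p'r; rewrite kp' (leq_trans (ltnW p'r) re) /=; lia.
move=> e _; move: re; rewrite e; lia.
Qed.

Lemma ee_prevR k : nth false D k -> nth false D (ee k).-1 = false /\ k < (ee k).-1.
Proof.
move=> hup; have [ke en he nce hm] := ee_spec hup.
have kn := up_ltn hup; have hk1 := hk_up kn hup.
have mpos : (0 < Posz m)%R by rewrite ltz_nat.
have k1 : k.+1 < ee k.
  rewrite ltn_neqAle ke andbT; apply/eqP => e; move: he; rewrite -e hk1; lia.
have g := ee_ge0 hup (p:=(ee k).-1) ltac:(lia) ltac:(lia).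
have E := hkS k (p:=(ee k).-1) ltac:(lia); rewrite prednK ?(leq_ltn_trans _ k1) // in E.
split; last by lia.
by move: E he g; case: (nth _ _ _) => //; lia.
Qed.

Lemma ee_nextR k : nth false D k -> ee k < n -> nth false D (ee k) = false.
Proof.
move=> hup een; have [ke en he nce hm] := ee_spec hup.
have [pr _] := ee_prevR hup.
move: nce; rewrite /is_corner een (leq_ltn_trans (leq0n _) ke) /= pr.
by case: (nth _ _ _).
Qed.

Lemma after_e k j : nth false D k -> nth false D j -> ee k <= j -> (xx (ee k)).+1 <= xx j.
Proof.
move=> hup hj ej; have jn := up_ltn hj.
have en : ee k < n by lia.
have nr := ee_nextR hup en.
have ej' : ee k < j by rewrite ltn_neqAle ej andbT; apply/eqP => e; move: hj; rewrite -e nr.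
have := xS en; rewrite nr /= addn1 => <-.
by apply: x_mono => //; lia.
Qed.

Lemma nest_pos k k' p : nth false D k -> nth false D k' -> k < k' -> k' < ee k ->
  (0 < hk k k')%R -> k' < p -> p <= n -> (hk k p < hk k k')%R ->
  ee k' < p /\ (xx (ee k')).+1 <= xx p.
Proof.
move=> hup hup2 kk' k'e c0 k'p pn hp.
have hw : [&& k' < p, p <= n & (hk k p < hk k k')%R] by rewrite k'p pn hp.
have [r [/and3P [k'r rn hr] hmin]] :=
  @first_ex (fun p => [&& k' < p, p <= n & (hk k p < hk k k')%R]) p hw.
have rp : r <= p by case: (leqP r p) => // pr; have := hmin p pr; rewrite hw.
have hr' : (hk k' r < 0)%R by rewrite (hk_trans k k' r); lia.
have [e nr] : ee k' = r.-1 /\ nth false D r.-1 = false.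
  apply: lemU => //.
  by move=> p' k'p' p'r; have := hmin p' p'r; rewrite k'p' (leq_trans (ltnW p'r) rn) /= (hk_trans k k' p'); lia.
split; first by rewrite e; lia.
have r1n : r.-1 < n by lia.
have := xS r1n; rewrite nr prednK ?(leq_ltn_trans _ k'r) // e addn1 => <-.
exact: x_mono.
Qed.

Lemma nest_zero k k' : nth false D k -> nth false D k' -> k < k' -> k' < ee k ->
  hk k k' = 0%R -> ee k' = ee k.
Proof.
move=> hup hup2 kk' k'e c0; have [ke en he nce hm] := ee_spec hup.
apply: ee_char => //; try by rewrite (hk_trans k k' (ee k)) he c0 subrr.
move=> p' k'p' p'e h'; apply: hm => //; first by lia.
by move: h'; rewrite (hk_trans k k' p') c0 subr0.
Qed.

Lemma nest k k' : nth false D k -> nth false D k' -> k < k' -> k' < ee k ->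
  ee k' <= ee k.
Proof.
move=> hup hup2 kk' k'e; have [ke en he nce hm] := ee_spec hup.
have := ee_ge0 hup kk' (ltnW k'e); rewrite le0r => /orP [/eqP c0|c0].
  by rewrite (nest_zero hup hup2 kk' k'e c0).
have [] := nest_pos hup hup2 kk' k'e c0 k'e en; first by rewrite he.
by move=> *; apply: ltnW.
Qed.


Definition rL k (L : nat) := find (fun p => (k < p) && (hk k p == Posz L)) (iota 0 n.+1).

Lemma rL_spec k L : nth false D k -> L <= m ->
  [/\ k < rL k L, rL k L <= ee k, hk k (rL k L) = Posz L &
      forall p, k < p -> p < rL k L -> (Posz L < hk k p)%R].
Proof.
move=> hup Lm; have kn := up_ltn hup; have hk1 := hk_up kn hup.
have [ke en he _ _] := ee_spec hup.
have [p [k1p pe hp]] : exists p, [/\ k.+1 <= p, p <= ee k & hk k p = Posz L].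
  by apply: ivt_down => //; [rewrite hk1; lia | rewrite he; lia].
set P := fun p => (k < p) && (hk k p == Posz L).
have hP : has P (iota 0 n.+1).
  by apply/hasP; exists p; [rewrite mem_iota; lia | rewrite /P k1p hp eqxx].
have jn : rL k L < n.+1 by rewrite -[X in _ < X](size_iota 0) -has_find.
have Pj := nth_find 0 hP; rewrite nth_iota // add0n -/(rL k L) in Pj.
case/andP: Pj => kr /eqP hr.
have bef : forall p', p' < rL k L -> ~~ P p'.
  move=> p' p'r; have := before_find 0 p'r; rewrite nth_iota ?(ltn_trans p'r jn) // add0n.
  by rewrite /P => ->.
have rp : rL k L <= p by case: (leqP (rL k L) p) => // pr; have := bef p pr; rewrite /P k1p hp eqxx.
split => //; first by apply: leq_trans rp pe.
move=> p' kp' p'r.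
case: (ltrP (Posz L) (hk k p')) => // hle.
have [p'' [h1 h2 h3]] := ivt_down (k:=k) (a:=k.+1) (b:=p') (L:=Posz L) kp' ltac:(lia) ltac:(rewrite hk1; lia) hle.
by have := bef p'' ltac:(lia); rewrite /P h3 eqxx andbT; lia.
Qed.

Lemma rL_char k L p : k < p -> p <= n -> hk k p = Posz L ->
  (forall p', k < p' -> p' < p -> hk k p' != Posz L) -> rL k L = p.
Proof.
move=> kp pn hp hmin.
set P := fun p => (k < p) && (hk k p == Posz L).
have hP : has P (iota 0 n.+1).
  by apply/hasP; exists p; [rewrite mem_iota; lia | rewrite /P kp hp eqxx].
have jn : rL k L < n.+1 by rewrite -[X in _ < X](size_iota 0) -has_find.
have Pj := nth_find 0 hP; rewrite nth_iota // add0n -/(rL k L) in Pj.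
case/andP: Pj => kr /eqP hr.
case: (ltngtP (rL k L) p) => // lt.
  by have := hmin _ kr lt; rewrite hr eqxx.
have := before_find 0 lt; rewrite nth_iota ?(ltn_trans lt jn) // add0n.
by rewrite /P kp hp eqxx.
Qed.

Lemma rL_m k : nth false D k -> rL k m = k.+1.
Proof.
move=> hup; have kn := up_ltn hup.
apply: rL_char => //; first by apply: hk_up.
by move=> p' kp' p'k; lia.
Qed.

Lemma rL_lt k L L' : nth false D k -> L < L' -> L' <= m -> rL k L' < rL k L.
Proof.
move=> hup LL' L'm.
have [k1 e1 h1 m1] := rL_spec hup (ltnW (leq_trans LL' L'm)).
have [k2 e2 h2 m2] := rL_spec hup L'm.
case: (ltngtP (rL k L') (rL k L)) => // lt.
  by have := m2 _ k1 lt; rewrite h1; lia.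
by move: h1; rewrite -lt h2; lia.
Qed.

Lemma rL_prevR k L : nth false D k -> L < m ->
  [/\ k < (rL k L).-1, nth false D (rL k L).-1 = false & xx (rL k L) = (xx (rL k L).-1).+1].
Proof.
move=> hup Lm; have kn := up_ltn hup; have hk1 := hk_up kn hup.
have [kr re hr hm] := rL_spec hup (ltnW Lm).
have [_ en _ _ _] := ee_spec hup.
have k1 : k.+1 < rL k L.
  rewrite ltn_neqAle kr andbT; apply/eqP => e; move: hr; rewrite -e hk1; lia.
have g := hm (rL k L).-1 ltac:(lia) ltac:(lia).
have rn : (rL k L).-1 < n by lia.
have E := hkS k rn; rewrite prednK ?(leq_ltn_trans _ k1) // in E.
have nr : nth false D (rL k L).-1 = false by move: E hr g; case: (nth _ _ _) => //; lia.
split; [lia | exact nr | ].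
by have := xS rn; rewrite nr prednK ?(leq_ltn_trans _ k1) // addn1.
Qed.

Definition g k s := if s <= m then xx (rL k (m - s)) else (xx (ee k)).+1.

Lemma g0 k : nth false D k -> g k 0 = xx k.
Proof.
move=> hup; rewrite /g leq0n subn0 rL_m //.
by rewrite xS ?up_ltn // hup addn0.
Qed.

Lemma g_bounds k s : nth false D k -> s <= m ->
  [/\ k < rL k (m - s), rL k (m - s) <= ee k, xx k <= g k s & g k s <= xx (ee k)].
Proof.
move=> hup sm; have [_ en _ _ _] := ee_spec hup.
have [kr re _ _] := rL_spec hup (leq_subr s m).
rewrite /g sm; split => //; apply: x_mono; lia.
Qed.

Lemma g_incr k s : nth false D k -> s <= m -> g k s < g k s.+1.
Proof.
move=> hup sm; case: (ltnP s m) => [sm'|ms].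
  rewrite /g sm sm'.
  have [k1 pr xr] := rL_prevR hup (L := m - s.+1) ltac:(lia).
  have lt := rL_lt hup (L := m - s.+1) (L' := m - s) ltac:(lia) ltac:(lia).
  have [_ en _ _ _] := ee_spec hup.
  have [_ re _ _] := rL_spec hup (L := m - s.+1) ltac:(lia).
  rewrite xr ltnS; apply: x_mono; lia.
have -> : s = m by lia.
by rewrite /g leqnn ltnn; have [_ _ _ /leq_ltn_trans] := g_bounds hup (leqnn m); rewrite /g leqnn; apply.
Qed.

Lemma g_mono k s s' : nth false D k -> s <= s' -> s' <= m.+1 -> g k s <= g k s'.
Proof.
move=> hup ss'; elim: s' ss' => [|s' IH]; first by rewrite leqn0 => /eqP ->.
rewrite leq_eqVlt => /orP [/eqP -> //| lt] s'm.
by apply: leq_trans (IH lt (ltnW s'm)) (ltnW (g_incr hup _)).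
Qed.

Lemma g_strict k s s' : nth false D k -> s < s' -> s' <= m.+1 -> g k s < g k s'.
Proof.
move=> hup ss' s'm; apply: leq_trans (g_incr hup _) (g_mono hup ss' s'm); lia.
Qed.

Lemma g_last k : g k m.+1 = (xx (ee k)).+1.
Proof. by rewrite /g ltnn. Qed.

Lemma xee k : nth false D k -> xx (ee k) = xx k + m * bal_t m D k.
Proof.
move=> hup; have [ke en he _ _] := ee_spec hup.
have [e1 e2] := hk0_line (ltnW ke) en he.
rewrite e2; suff -> : yy (ee k) - yy k = bal_t m D k by [].

apply/eqP; rewrite -(eqn_pmul2l (ltn0Sn m)); apply/eqP.
move: e1; rewrite {1}/ee; set q := yy _ - yy _; lia.
Qed.

Lemma label_in k : nth false D k -> 0 < k -> (xx k, (xx (ee k)).+1) \in bal_labels m D.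
Proof.
move=> hup kpos; apply/mapP; exists k.
  by rewrite mem_filter hup find_first kpos mem_iota /= up_ltn.
by rewrite /bal_label /pt /= xee.
Qed.

Lemma label_inv lab : lab \in bal_labels m D ->
  exists k, [/\ nth false D k, 0 < k & lab = (xx k, (xx (ee k)).+1)].
Proof.
case/mapP => k; rewrite mem_filter find_first => /andP [/andP [hup kpos] _] ->.
by exists k; split => //; rewrite /bal_label /pt /= xee.
Qed.


Local Notation N := (m * l + 2).

Lemma xee_le k : nth false D k -> xx (ee k) <= m * l.
Proof. by move=> hup; have [_ en _ _ _] := ee_spec hup; rewrite -xn; apply: x_mono. Qed.

Lemma g_ltN k s : nth false D k -> s <= m.+1 -> g k s < N.
Proof.
move=> hup sm; have := g_mono hup sm (leqnn _); rewrite g_last.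
have := xee_le hup; lia.
Qed.

Lemma bedge_succ a b : b = a.+1 -> b < N -> boundary_edge N a b.
Proof. by move=> -> bN; rewrite /boundary_edge modn_small // eqxx. Qed.

Lemma ee0 : ee 0 = n.
Proof.
have n0 : 0 < n by rewrite sizeD; nia.
have mpos : (0 < Posz m)%R by rewrite ltz_nat.
apply: ee_char => //; first exact: nth0.
- by rewrite /hk Hn H0 subrr.
- by rewrite /is_corner ltnn andbF.
move=> p' p'pos p'n; rewrite /hk H0 subr0 => h0.
have E := HS p'n; have g := H_ge0 p'n.
have np : nth false D p' by move: E; rewrite h0; case: (nth _ _ _) => //; have := H_ge0 (p:=p'.+1) p'n; lia.
have E2 := HS (p:=p'.-1) ltac:(lia); rewrite prednK // in E2.
have np2 : nth false D p'.-1 = false.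
  by move: E2; rewrite h0; case: (nth _ _ _) => //; have := H_ge0 (p:=p'.-1) ltac:(lia); lia.
by rewrite /is_corner p'pos p'n np np2.
Qed.

Lemma side_mid k s : nth false D k -> s <= m ->
  boundary_edge N (g k s) (g k s.+1) || rtn m D (g k s) (g k s.+1).
Proof.
move=> hup sm.
have gN := g_ltN hup (s:=s.+1) ltac:(lia).
have [ke en he nce hm] := ee_spec hup.
case: (ltnP s m) => [sm'|ms].
  set L := m - s.
  have Lpos : 0 < L by rewrite /L; lia.
  have [kq qe hq hmq] := rL_spec hup (L:=L) ltac:(lia).
  set q := rL k L in kq qe hq hmq.
  have qn : q < n.
    case: (ltnP q n) => // nq; have qe' : q = ee k by lia.
    by move: hq; rewrite qe' he; lia.
  have gs : g k s = xx q by rewrite /g sm.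
  have gs1 : g k s.+1 = xx (rL k L.-1) by rewrite /g sm' /L; congr (xx (rL k _)); lia.
  have [kq1 qe1 hq1 hmq1] := rL_spec hup (L:=L.-1) ltac:(lia).
  have qq1 : q < rL k L.-1 by apply: rL_lt => //; lia.
  case nq: (nth false D q).
    apply/orP; right; apply/orP; left.
    have [e nr] : ee q = (rL k L.-1).-1 /\ nth false D (rL k L.-1).-1 = false.
      apply: lemU => //; try lia.
        by rewrite (hk_trans k) hq1 hq; lia.
      move=> p qp pr; rewrite (hk_trans k) hq; have := hmq1 p ltac:(lia) pr; lia.
    have [_ _ xr] := rL_prevR hup (L:=L.-1) ltac:(lia).
    rewrite gs gs1 xr -e; apply: label_in => //; lia.
  apply/orP; left; apply: bedge_succ => //.
  rewrite gs gs1.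
  have -> : rL k L.-1 = q.+1.
    apply: rL_char; try lia.
      by rewrite hkSf // hq; lia.
    move=> p' kp' p'q; case: (ltngtP p' q) => [lt||e]; try lia.
      by have := hmq p' kp' lt; lia.
    by rewrite e hq; lia.
  by rewrite xS // nq addn1.
have sm2 : s = m by lia.
rewrite sm2 g_last.
have gm : g k m = xx (rL k 0) by rewrite /g leqnn subnn.
rewrite gm.
have [kq qe hq hmq] := rL_spec hup (L:=0) ltac:(lia).
have [_ pr _] := rL_prevR hup (L:=0) m_gt0.
case: (ltngtP (rL k 0) (ee k)) => [lt||e]; last first.
- by apply/orP; left; apply: bedge_succ; [rewrite e | have := xee_le hup; lia].
- lia.
have c := hm _ kq lt hq.
have [cpos cn cne] := corner_nth c.
have nq : nth false D (rL k 0) by move: cne; rewrite pr; case: (nth _ _ _).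
apply/orP; right; apply/orP; left.
rewrite -(nest_zero hup nq kq lt hq); apply: label_in => //; lia.
Qed.

Lemma side_wrap k : nth false D k ->
  boundary_edge N (g k m.+1) (g k 0) || rtn m D (g k m.+1) (g k 0).
Proof.
move=> hup; rewrite g_last g0 //.
case: (posnP k) => [k0|kpos].
  apply/orP; left; rewrite /boundary_edge k0 ee0 xn x0.
  have -> : (m * l).+1.+1 = N by rewrite addn2.
  by rewrite modnn eqxx ?orbT.
by apply/orP; right; apply/orP; right; apply: label_in.
Qed.

Lemma noncross k k' : nth false D k -> nth false D k' ->
  (forall s, s <= m.+1 -> g k s <= xx k' \/ (xx (ee k')).+1 <= g k s) \/
  (forall s, s <= m.+1 -> xx k' <= g k s /\ g k s <= (xx (ee k')).+1).
Proof.
move=> hup hup2.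
have [ke en he nce hm] := ee_spec hup.
have [ke' en' he' nce' hm'] := ee_spec hup2.
have gb : forall s, s <= m.+1 -> xx k <= g k s /\ g k s <= (xx (ee k)).+1.
  move=> s sm; split.
    by rewrite -(g0 hup); apply: g_mono.
  by rewrite -g_last; apply: g_mono.
case: (ltngtP k' k) => [lt|lt|e]; last first.
- by right; rewrite e.
- case: (ltnP k' (ee k)) => [k'e|ek']; last first.
    left => s sm; left; have [_ h] := gb s sm; have := after_e hup hup2 ek'; lia.
  left => s sm.
  case: (ltnP m s) => [ms|sm'].
    have -> : s = m.+1 by lia.
    by right; rewrite g_last ltnS; apply: x_mono (nest hup hup2 lt k'e) en.
  have [kq qe hq hmq] := rL_spec hup (L:=m - s) (leq_subr _ _).
  case: (leqP (rL k (m - s)) k') => [qk'|k'q].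
    by left; rewrite /g sm'; apply: x_mono => //; lia.
  right.
  have c0 := hmq k' lt k'q.
  have [_ ] := nest_pos hup hup2 lt k'e (p:=rL k (m - s)) ltac:(lia) k'q ltac:(lia) ltac:(lia).
  by rewrite /g sm'.
- case: (ltnP k (ee k')) => [ke2|ek]; last first.
    left => s sm; right; have [h _] := gb s sm; have := after_e hup2 hup ek; lia.
  right => s sm; have [h1 h2] := gb s sm; split.
    by apply: leq_trans h1; apply: x_mono => //; lia.
  by have := x_mono (nest hup2 hup lt ke2) en'; lia.
Qed.

End PathLemmas.

End A.
Import A.

Module C.
Set Implicit Arguments. Unset Strict Implicit. Unset Printing Implicit Defensive.

Section Main.
Variables (m l : nat) (D : seq bool).
Hypothesis m_gt0 : 0 < m.
Hypothesis l_gt0 : 0 < l.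
Hypothesis dyck : is_mDyck m l D.

Local Notation n := (size D).
Local Notation N := (m * l + 2).
Local Notation xx p := (n_right (take p D)).
Local Notation yy p := (n_up (take p D)).
Local Notation g := (g m D).
Local Notation ee := (ee m D).
Local Notation dg := (rtn m D).

Local Notation H_ge0 := (A.H_ge0 m_gt0 l_gt0 dyck).
Local Notation HS := (A.HS m_gt0 l_gt0 dyck).
Local Notation rL_char := (A.rL_char m_gt0 l_gt0 dyck).
Local Notation y_mono := (A.y_mono m_gt0 l_gt0 dyck).
Local Notation find_first := (A.find_first m_gt0 l_gt0 dyck).
Local Notation nth0 := (A.nth0 m_gt0 l_gt0 dyck).
Local Notation ee0 := (A.ee0 m_gt0 l_gt0 dyck).
Local Notation xn := (A.xn dyck).
Local Notation sizeD := (A.sizeD dyck).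
Local Notation yn := (A.yn dyck).
Local Notation x_mono := (A.x_mono m_gt0 l_gt0 dyck).
Local Notation ee_ge0 := (A.ee_ge0 m_gt0 l_gt0 dyck).
Local Notation nest_pos := (A.nest_pos m_gt0 l_gt0 dyck).
Local Notation after_e := (A.after_e m_gt0 l_gt0 dyck).
Local Notation g_strict := (A.g_strict m_gt0 l_gt0 dyck).
Local Notation g_mono := (A.g_mono m_gt0 l_gt0 dyck).
Local Notation g_ltN := (A.g_ltN m_gt0 l_gt0 dyck).
Local Notation g0 := (A.g0 m_gt0 l_gt0 dyck).
Local Notation side_mid := (A.side_mid m_gt0 l_gt0 dyck).
Local Notation side_wrap := (A.side_wrap m_gt0 l_gt0 dyck).
Local Notation noncross := (A.noncross m_gt0 l_gt0 dyck).
Local Notation label_inv := (A.label_inv m_gt0 l_gt0 dyck).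
Local Notation label_in := (A.label_in m_gt0 l_gt0 dyck).
Local Notation ee_spec := (A.ee_spec m_gt0 l_gt0 dyck).
Local Notation xee := (A.xee m_gt0 l_gt0 dyck).

Definition Pk k := [set w : 'I_N | nat_of_ord w \in [seq g k s | s <- iota 0 m.+2]].

Lemma Pk_mem k (w : 'I_N) : (w \in Pk k) = has (fun s => nat_of_ord w == g k s) (iota 0 m.+2).
Proof.
rewrite inE; apply/mapP/hasP => [[s si e]|[s si /eqP e]]; exists s => //.
by apply/eqP.
Qed.

Lemma Pk_memP k (w : 'I_N) : reflect (exists2 s, s <= m.+1 & nat_of_ord w = g k s) (w \in Pk k).
Proof.
rewrite Pk_mem; apply: (iffP hasP) => [[s]|[s]].
  by rewrite mem_iota /= => hs /eqP e; exists s.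
by move=> hs e; exists s; [rewrite mem_iota /= | apply/eqP].
Qed.

Definition ordN (x : nat) (h : x < N) : 'I_N := Ordinal h.

Lemma Pk_card k : nth false D k -> #|Pk k| = m.+2.
Proof.
move=> hup.
set s := [seq g k s | s <- iota 0 m.+2].
have us : uniq s.
  rewrite map_inj_in_uniq ?iota_uniq // => a b; rewrite !mem_iota /= => ha hb e.
  case: (ltngtP a b) => // lt.
    by have := g_strict hup lt ltac:(lia); rewrite e ltnn.
  by have := g_strict hup lt ltac:(lia); rewrite e ltnn.
have allN : all (fun x => x < N) s.
  by apply/allP => x /mapP [t]; rewrite mem_iota /= => ht ->; apply: g_ltN; lia.
rewrite (@eq_card _ _ (mem (pmap insub s : seq 'I_N))); last first.
  by move=> w; rewrite inE mem_pmap_sub.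
have u2 : uniq (pmap insub s : seq 'I_N) by apply: pmap_sub_uniq.
rewrite (card_uniqP u2).
move: allN; rewrite size_pmap_sub all_count => /eqP ->.
by rewrite size_map size_iota.
Qed.


Lemma Pk_in k s (hup : nth false D k) (hs : s <= m.+1) :
  ordN (g_ltN hup hs) \in Pk k.
Proof. by apply/Pk_memP; exists s. Qed.

Lemma side_g k (a b : 'I_N) : nth false D k -> is_side (Pk k) a b ->
  (exists2 s, s <= m & nat_of_ord a = g k s /\ nat_of_ord b = g k s.+1) \/
  (nat_of_ord a = g k m.+1 /\ nat_of_ord b = g k 0).
Proof.
move=> hup /side_mem [aS bS ab hs].
have ab' : nat_of_ord a <> nat_of_ord b by move=> e; move: ab; rewrite (ord_inj e) eqxx.
case/Pk_memP: aS => sa sam ea; case/Pk_memP: bS => sb sbm eb.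
have hc : forall s (hs : s <= m.+1),
    ~~ strictly_between N a b (ordN (g_ltN hup hs)) by move=> s hs'; apply: hs; apply: Pk_in.
case: (ltnP sa m.+1) => [sam'|sam'].
  left; exists sa; first lia.
  split => //.
  case: (ltngtP sb sa.+1) => [lt|gt|e]; last by rewrite eb e.
    case: (ltngtP sb sa) => [lt2|gt2|e2]; last by exfalso; apply: ab'; rewrite ea eb e2.
      have h1 := g_strict hup lt2 sam; have h2 := g_strict hup sam' (leqnn _).
      by have := hc m.+1 (leqnn _); rewrite sbE // ea eb /= h1 h2 orbT.
    lia.
  have h1 := g_strict hup (ltnSn sa) sam'; have h2 := g_strict hup gt sbm.
  by have := hc sa.+1 sam'; rewrite sbE // ea eb /= h1 h2 (ltn_trans h1 h2).
have esa : sa = m.+1 by lia.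
right; split; first by rewrite ea esa.
case: (posnP sb) => [sb0|sbpos]; first by rewrite eb sb0.
have sblt : sb < m.+1 by case: (ltngtP sb m.+1) => // e; [lia | exfalso; apply: ab'; rewrite ea eb e esa].
have h1 := g_strict hup sbpos sbm; have h2 := g_strict hup sblt (leqnn _).
by have := hc 0 (leq0n _); rewrite sbE // ea eb esa /= h1 h2 !orbT.
Qed.


Lemma label_le k : nth false D k -> xx k <= xx (ee k).
Proof.
move=> hup; have [ke en _ _ _] := ee_spec hup.
exact: (x_mono (ltnW ke) en).
Qed.

Lemma Pk_piece k : nth false D k -> is_piece dg (Pk k).
Proof.
move=> hup; rewrite /is_piece Pk_card // ltnS ltnS m_gt0 /=.
apply/andP; split.
  apply/forallP => a; apply/forallP => b; apply/implyP => sab.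
  have [[s sm [ea eb]] | [ea eb]] := side_g hup sab; rewrite ea eb.
    exact: side_mid.
  exact: side_wrap.
apply/forallP => x; apply/forallP => y; apply/implyP => dxy.
apply/negP => /existsP [c /andP [cS /existsP [d /andP [dS /andP [sc sd]]]]].
case/Pk_memP: cS => sc' sc'm ec; case/Pk_memP: dS => sd' sd'm ed.
move: sc sd; rewrite !sbE // ec ed.
case/orP: dxy => /label_inv [k' [hup' k'pos e]]; case: e => ex ey; rewrite ex ey;
  have pq := label_le hup';
  have [nc|nc] := noncross hup hup';
  have := nc sc' sc'm; have := nc sd' sd'm; lia.
Qed.


Lemma ups_ne k k' : nth false D k -> nth false D k' -> k < k' ->
  xx k = xx k' -> xx (ee k) = xx (ee k') -> False.
Proof.
move=> hup hup' kk' ex ee'.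
have [ke en he nce hm] := ee_spec hup.
case: (ltnP k' (ee k)) => [k'e|ek'].
  have := ee_ge0 hup kk' (ltnW k'e); rewrite le0r => /orP [/eqP c0|c0].
    have [cpos cn cne] := corner_nth (hm _ kk' k'e c0).
    have np : nth false D k'.-1 = false by move: cne; rewrite hup'; case: (nth _ _ _).
    have := xS (D:=D) (p:=k'.-1) ltac:(lia); rewrite prednK // np addn1 => e1.
    have := x_mono (p:=k) (q:=k'.-1) ltac:(lia) ltac:(lia); lia.
  have [_] := nest_pos hup hup' kk' k'e c0 k'e en ltac:(rewrite he; exact c0).
  by rewrite ee'; lia.
have := after_e hup hup' ek'; have := label_le hup; lia.
Qed.

Lemma Pk_inj k k' : nth false D k -> nth false D k' -> Pk k = Pk k' -> k = k'.
Proof.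
move=> hup hup' e.
have key : forall k k', nth false D k -> nth false D k' -> Pk k = Pk k' ->
    g k' 0 <= g k 0 /\ g k m.+1 <= g k' m.+1.
  move=> a b ha hb eab; split.
    have := Pk_in ha (leq0n m.+1); rewrite eab => /Pk_memP [s sm /= ->].
    exact: g_mono.
  have := Pk_in ha (leqnn m.+1); rewrite eab => /Pk_memP [s sm /= ->].
  exact: g_mono.
have [h1 h2] := key _ _ hup hup' e; have [h3 h4] := key _ _ hup' hup (esym e).
rewrite !g0 // in h1 h3; rewrite !g_last in h2 h4.
have ex : xx k = xx k' by lia.
have eee : xx (ee k) = xx (ee k') by lia.
case: (ltngtP k k') => // lt.
  by exfalso; apply: (ups_ne hup hup' lt ex eee).
by exfalso; apply: (ups_ne hup' hup lt (esym ex) (esym eee)).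
Qed.


Definition Av v := [seq k <- iota 0 n | nth false D k && (0 < k) && (xx k == v)].
Definition Bv v := [seq k <- iota 0 n | nth false D k && (0 < k) && ((xx (ee k)).+1 == v)].

Lemma yy_pos k : k <= n -> (0 < yy k) = (0 < k).
Proof.
move=> kn; case: (posnP k) => [->|kpos]; first by rewrite y0.
have n0 : 0 < n by lia.
have := y_mono (p:=1) (q:=k) kpos kn; rewrite (yS n0) y0 nth0 /=.
by move=> h; apply/idP; lia.
Qed.

Lemma upD_eq v : up_D D v = size (Av v).
Proof.
rewrite /up_D /Av size_filter; apply: eq_in_count => k; rewrite mem_iota /= => kn.
rewrite /pt /= yy_pos; last by lia.
by case: (nth _ _ _); case: (0 < k); case: (_ == v).
Qed.

Lemma nonfirst_mem k : (k \in nonfirst_ups D) = [&& nth false D k, 0 < k & k < n].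
Proof. by rewrite mem_filter find_first mem_iota /= andbA. Qed.

Lemma balD_eq v : bal_D m D v = size (Bv v).
Proof.
rewrite /bal_D /bal_labels count_map /nonfirst_ups count_filter /Bv size_filter.
apply: eq_in_count => k; rewrite mem_iota /= => kn; rewrite find_first.
case hk: (nth false D k) => //=; last by rewrite andbF.
by rewrite /bal_label /pt /= -xee // andbC.
Qed.

Lemma fst_count v : count (fun lab : nat * nat => lab.1 == v) (bal_labels m D) = size (Av v).
Proof.
rewrite /bal_labels count_map /nonfirst_ups count_filter /Av size_filter.
apply: eq_in_count => k; rewrite mem_iota /= => kn; rewrite find_first.
case hk: (nth false D k) => //=; last by rewrite andbF.
by rewrite /bal_label /pt /= andbC.
Qed.

Lemma dg_card (v : 'I_N) : #|[set w : 'I_N | dg v w]| <= up_D D v + bal_D m D v.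
Proof.
set L := bal_labels m D.
rewrite (_ : [set w : 'I_N | dg v w] =
   [set w : 'I_N | nat_of_ord w \in [seq lab.2 | lab <- L & lab.1 == nat_of_ord v]] :|:
   [set w : 'I_N | nat_of_ord w \in [seq lab.1 | lab <- L & lab.2 == nat_of_ord v]]); last first.
  apply/setP => w; rewrite !inE /rtn; congr (_ || _).
    apply/idP/mapP => [h|[lab]]; first by exists (nat_of_ord v, nat_of_ord w); rewrite // mem_filter /= eqxx.
    by rewrite mem_filter => /andP [/eqP e1 h] ->; rewrite -e1 -surjective_pairing.
  apply/idP/mapP => [h|[lab]]; first by exists (nat_of_ord w, nat_of_ord v); rewrite // mem_filter /= eqxx.
  by rewrite mem_filter => /andP [/eqP e1 h] ->; rewrite -e1 -surjective_pairing.
apply: leq_trans (leq_card_setU _ _) _.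
rewrite upD_eq -fst_count.
apply: leq_add; apply: leq_trans (card_vals _ _) _; rewrite size_map size_filter //.
Qed.


Lemma extra_mid v : 0 < v -> v <= m * l ->
  exists c L, [/\ nth false D c, L < m & xx (rL m D c L) = v].
Proof.
move=> vpos vml.
have hw : v <= xx n by rewrite xn.
have [p [hp hmin]] := @first_ex (fun p => v <= xx p) n hw.
have pn : p <= n by case: (leqP p n) => // np; have := hmin n np; rewrite hw.
have ppos : 0 < p by case: (posnP p) hp => // ->; rewrite x0; lia.
set s0 := p.-1.
have s0n : s0 < n by rewrite /s0; lia.
have ps0 : p = s0.+1 by rewrite /s0 prednK.
have xs0 : xx s0 < v by have := hmin s0 ltac:(rewrite /s0; lia); rewrite -ltnNge.
have E := xS s0n; rewrite -ps0 in E.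
have ns0 : nth false D s0 = false by move: E hp; case: (nth _ _ _) => /=; lia.
have xp : xx p = v by move: E hp; rewrite ns0 /=; lia.
have Hp0 : (0 <= H m D p)%R by apply: H_ge0.
have exP : exists j, (j <= s0) && (H m D j <= H m D p)%R by exists 0; rewrite leq0n H0.
have ubP : forall j, (j <= s0) && (H m D j <= H m D p)%R -> j <= s0 by move=> j /andP [].
case: (ex_maxnP exP ubP) => c /andP [cs0 Hc] cmax.
have above : forall j, c < j -> j <= s0 -> (H m D p < H m D j)%R.
  move=> j cj js; case: (ltrP (H m D p) (H m D j)) => // hj.
  by have := cmax j; rewrite js hj => /(_ isT); lia.
have HSs0 := HS s0n; rewrite -ps0 ns0 in HSs0.
have cs : c < s0.
  rewrite ltn_neqAle cs0 andbT; apply/eqP => e; move: Hc; rewrite e HSs0; lia.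
have cn : c < n by lia.
have HSc := HS cn.
have nc : nth false D c.
  case hc: (nth false D c) => //; rewrite hc in HSc.
  by have := above c.+1 (ltnSn c) cs; rewrite HSc; lia.
rewrite nc in HSc.
have hcp : (0 <= hk m D c p)%R by rewrite /hk; lia.
have hcm : (hk m D c p < Posz m)%R.
  by have := above c.+1 (ltnSn c) cs; rewrite HSc /hk; lia.
exists c, (absz (hk m D c p)); split => //.
  by move: hcm; rewrite -{1}(gez0_abs hcp); rewrite ltz_nat.
rewrite (rL_char (p:=p)) //; first lia.
  by rewrite gez0_abs.
move=> p' cp' p'p; rewrite gez0_abs //.
have := above p' cp' ltac:(lia); rewrite /hk => h.
by apply/eqP; lia.
Qed.


Lemma extra v : v < N -> exists c, [/\ nth false D c, exists2 s, s <= m.+1 & v = g c s,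
   c \notin Av v & c \notin Bv v].
Proof.
move=> vN.
have nA : forall c, c \notin Av 0 -> True by [].
case: (posnP v) => [v0|vpos].
  exists 0; split; first exact: nth0.
  - by exists 0; rewrite // g0 ?nth0 // x0.
  - by rewrite /Av mem_filter ltnn andbF.
  - by rewrite /Bv mem_filter ltnn andbF.
case: (ltnP (m * l) v) => [mlv|vml].
  exists 0; split; first exact: nth0.
  - by exists m.+1; rewrite // A.g_last ee0 xn; lia.
  - by rewrite /Av mem_filter ltnn andbF.
  - by rewrite /Bv mem_filter ltnn andbF.
have [c [L [hc Lm xr]]] := extra_mid vpos vml.
have sm : m - L <= m.+1 by lia.
have gs : g c (m - L) = v by rewrite /A.g leq_subr subKn ?xr //; lia.
have h1 := g_strict hc (s:=0) (s':=m - L) ltac:(lia) sm.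
have h2 := g_strict hc (s:=m - L) (s':=m.+1) ltac:(lia) (leqnn _).
rewrite gs g0 // in h1; rewrite gs A.g_last in h2.
exists c; split => //.
- by exists (m - L).
- by rewrite /Av mem_filter; apply/negP => /andP [/andP [_ /eqP e] _]; lia.
- by rewrite /Bv mem_filter; apply/negP => /andP [/andP [_ /eqP e] _]; lia.
Qed.

Lemma lower (v : 'I_N) :
  up_D D v + bal_D m D v + 1 <=
  #|[set S : {set 'I_N} | is_piece dg S & (#|S| == m.+2) && (v \in S)]|.
Proof.
have [c [hc [s sm vs] cA cB]] := extra (ltn_ord v).
set K := Av v ++ Bv v ++ [:: c].
have Kup : forall k, k \in K -> nth false D k.
  move=> k; rewrite !mem_cat !mem_filter inE => /orP [/andP [/andP [/andP [h _] _] _]|/orP [/andP [/andP [/andP [h _] _] _]|/eqP ->]] //.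
have Kv : forall k, k \in K -> v \in Pk k.
  move=> k; rewrite !mem_cat !mem_filter inE => /orP [/andP [/andP [/andP [h _] /eqP e] _]|/orP [/andP [/andP [/andP [h _] /eqP e] _]|/eqP ->]].
  - by apply/Pk_memP; exists 0; rewrite // g0.
  - by apply/Pk_memP; exists m.+1; rewrite // A.g_last.
  - by apply/Pk_memP; exists s.
have uK : uniq K.
  rewrite /K !cat_uniq /= !filter_uniq ?iota_uniq // has_cat /= !orbF (negbTE cA) (negbTE cB) orbF /= !andbT.
  apply/hasPn => k kB; apply/negP.
  move: kB; rewrite !mem_filter => /andP [/andP [/andP [hk _] /eqP e1] _] /andP [/andP [_ /eqP e2] _].
  by have := label_le hk; lia.
have uPK : uniq (map Pk K).
  by rewrite map_inj_in_uniq // => a b aK bK; apply: Pk_inj; apply: Kup.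
have sizeK : size K = up_D D v + bal_D m D v + 1.
  by rewrite /K !size_cat upD_eq balD_eq /=; lia.
rewrite -sizeK -(size_map Pk) -(card_uniqP uPK).
apply: subset_leq_card; apply/subsetP => S /mapP [k kK ->].
rewrite inE Pk_piece ?Kup // Pk_card ?Kup // eqxx Kv //.
Qed.


Lemma mu_val (i : nat) (hi : i < N) (p : nat) :
  mu N dg p i = if p == m.+2 then up_D D i + bal_D m D i + 1 else 0.
Proof.
set vI : 'I_N := Ordinal hi.
set P := fun q => [set S : {set 'I_N} | is_piece dg S & (#|S| == q) && (vI \in S)].
have muE : forall q, mu N dg q i = #|P q|.
  move=> q; rewrite /mu; apply: eq_card => S; rewrite !inE; congr (_ && (_ && _)).
  rewrite modn_small //; apply/existsP/idP => [[x /andP [xS /eqP e]]|vS].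
    by have -> : vI = x by apply: ord_inj.
  by exists vI; rewrite vS eqxx.
set Pall := [set S : {set 'I_N} | is_piece dg S & vI \in S].
have up : #|Pall| <= up_D D i + bal_D m D i + 1.
  apply: leq_trans (pieces_at_le _ vI) _.
  apply: leq_trans (card_W_le _ _) _.
  have := dg_card vI; rewrite /= => h; lia.
have low : up_D D i + bal_D m D i + 1 <= #|P m.+2| := lower vI.
have sub : forall q, P q \subset Pall.
  by move=> q; apply/subsetP => S; rewrite !inE => /andP [-> /andP [_ ->]].
rewrite muE; case: eqP => [->|qne].
  apply/eqP; rewrite eqn_leq low andbT; apply: leq_trans (subset_leq_card (sub _)) up.
have dis : P m.+2 :&: P p = set0.
  apply/setP => S; rewrite !inE.
  by apply/negP => /andP [/andP [_ /andP [/eqP e1 _]] /andP [_ /andP [/eqP e2 _]]]; apply: qne; rewrite -e2 e1.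
have := subset_leq_card (setUSS (sub m.+2) (sub p)); rewrite setUid cardsU dis cards0 subn0.
by move=> h; apply/eqP; rewrite -leqn0; move: h low up; lia.
Qed.

End Main.

End C.
Import C.

Local Open Scope ring_scope.

Theorem proposition5p7 (R : realType) (m l : nat) (D : seq bool) :
  (0 < m)%N -> (0 < l)%N -> is_mDyck m l D ->
  forall i : nat, (i <= m * l + 1)%N ->
    frieze_of R (m * l + 2) (rtn m D) (i%:Z - 1) (i%:Z + 1)
    = (up_D D i + bal_D m D i + 1)%:R * lambda R (m + 2).
Proof.
move=> mpos lpos dy i hi.
have hiN : (i < m * l + 2)%N by lia.
rewrite /frieze_of /frieze.
have -> : (i%:Z - 1 <= i%:Z + 1) = true by apply/idP; lia.
have -> : `|(i%:Z + 1 - (i%:Z - 1))%R|%N = 2%N by lia.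
rewrite /= mulr1 subr0.
have -> : i%:Z - 1 + 0 + 1 = i%:Z by lia.
rewrite /quiddity modz_nat /= modn_small //.
rewrite (bigD1_seq (m + 2)%N) /=; last first.
- exact: iota_uniq.
- rewrite mem_index_iota; nia.
rewrite big1 ?addr0.
  by rewrite (mu_val mpos lpos dy hiN) addn2 eqxx.
move=> p /negbTE pne; rewrite (mu_val mpos lpos dy hiN) -addn2 pne.
by rewrite mul0r.
Qed.
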